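(* Let $b\in\mathbb{R}$ and let $\gamma_0>0$, $\gamma_1>0$, $\gamma_2<0$, $\gamma_3<0$ be fixed (independent of $B$). For a parameter $B>0$, let $u=u(\cdot\,;B)$ be the solution of \[ u''''(x)=B\,u(x),\qquad x\in\mathbb{R}, \] with $u(b)=\gamma_0$, $u'(b)=\gamma_1$, $u''(b)=\gamma_2$, $u'''(b)=\gamma_3$. For $j=0,1,2,3$ let $z_j=z_j(B)$ denote the smallest zero of $u^{(j)}$ in the interval $(b,\infty)$, with the convention $z_j=\infty$ if $u^{(j)}$ does not vanish in $(b,\infty)$. Then there exists $B>0$ such that $z_1=z_3$. *)

(* Defs.v *)
From Stdlib Require Import Reals.
From Coquelicot Require Import Coquelicot.
Open Scope R_scope.

Definition solves_ivp (B b g0 g1 g2 g3 : R) (u : R -> R) : Prop :=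
  (forall (k : nat) (x : R), (k <= 4)%nat -> ex_derive_n u k x) /\
  (forall x : R, Derive_n u 4 x = B * u x) /\
  Derive_n u 0 b = g0 /\ Derive_n u 1 b = g1 /\
  Derive_n u 2 b = g2 /\ Derive_n u 3 b = g3.

Definition first_zero (f : R -> R) (b : R) (z : Rbar) : Prop :=
  match z with
  | Finite r => b < r /\ f r = 0 /\ (forall y, b < y < r -> f y <> 0)
  | p_infty => forall y, b < y -> f y <> 0
  | m_infty => False
  end.

(* Main.v *)
Require Import Defs.
From Stdlib Require Import Reals Lra Lia Classical.
From Coquelicot Require Import Coquelicot.
Open Scope R_scope.


Lemma dcont (f : R -> R) x l : is_derive f x l -> continuity_pt f x.
Proof. intros H. apply derivable_continuous_pt. exists l. apply is_derive_Reals, H. Qed.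

Lemma mvt (f df : R -> R) a b : a < b ->
  (forall x, a <= x <= b -> is_derive f x (df x)) ->
  exists c, a < c < b /\ f b - f a = df c * (b - a).
Proof.
  intros Hab Hd. destruct (MVT_cor2 f df a b Hab) as [c [H1 H2]].
  intros c Hc. apply is_derive_Reals, Hd, Hc.
  exists c; split; auto.
Qed.

Lemma incr_le (f df : R -> R) a b : a <= b ->
  (forall x, a <= x <= b -> is_derive f x (df x)) ->
  (forall x, a <= x <= b -> 0 <= df x) -> f a <= f b.
Proof.
  intros Hab Hd Hp. destruct (Req_dec a b) as [<-|Hne]; [lra|].
  destruct (mvt f df a b) as [c [Hc E]]; try lra; auto.
  assert (0 <= df c) by (apply Hp; lra). nra.
Qed.

Lemma incr_lt (f df : R -> R) a b : a < b ->
  (forall x, a <= x <= b -> is_derive f x (df x)) ->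
  (forall x, a <= x <= b -> 0 < df x) -> f a < f b.
Proof.
  intros Hab Hd Hp.
  destruct (mvt f df a b) as [c [Hc E]]; try lra; auto.
  assert (0 < df c) by (apply Hp; lra). nra.
Qed.

Lemma cont_ed (f : R -> R) x : continuity_pt f x ->
  forall eps, 0 < eps -> exists d, 0 < d /\ forall y, Rabs (y - x) < d -> Rabs (f y - f x) < eps.
Proof.
  intros H eps He. destruct (H eps He) as [d [Hd Hy]].
  exists d; split; auto. intros y Hy'.
  destruct (Req_dec y x) as [->|Hne].
  - rewrite Rminus_eq_0, Rabs_R0; auto.
  - apply (Hy y). split; [split; [exact I|auto]|]. exact Hy'.
Qed.

Lemma first_zero_ex (f : R -> R) a z :
  (forall x, continuity_pt f x) -> f a <> 0 -> a < z -> f z = 0 ->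
  exists r, a < r /\ r <= z /\ f r = 0 /\ forall y, a <= y < r -> f y <> 0.
Proof.
  intros Hc Ha Haz Hz.
  set (E := fun x => a <= x /\ forall y, a <= y <= x -> f y <> 0).
  assert (Hb : bound E).
  { exists z. intros x [Hx1 Hx2]. destruct (Rle_lt_dec x z); auto.
    exfalso. apply (Hx2 z); [lra|auto]. }
  assert (He : exists x, E x).
  { exists a. split; [lra|]. intros y Hy. replace y with a by lra. auto. }
  destruct (completeness E Hb He) as [r [Hub Hlub]].
  assert (Har : a <= r) by (apply Hub; destruct He as [x Hx]; red; split; [lra|]; intros y Hy; replace y with a by lra; auto).
  assert (Hbelow : forall y, a <= y < r -> f y <> 0).
  { intros y Hy. destruct (classic (exists x, E x /\ y <= x)) as [[x [[Hx1 Hx2] Hyx]]|Hn].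
    - apply Hx2; lra.
    - exfalso. assert (r <= y); [|lra]. apply Hlub. intros x Hx.
      destruct (Rle_lt_dec x y); auto. exfalso; apply Hn; exists x; split; auto; lra. }
  assert (Hrz : r <= z).
  { apply Hlub. intros x [Hx1 Hx2]. destruct (Rle_lt_dec x z); auto.
    exfalso. apply (Hx2 z); [lra|auto]. }
  assert (Hfr : f r = 0).
  { destruct (Req_dec (f r) 0) as [|Hne]; auto. exfalso.
    destruct (cont_ed f r (Hc r) (Rabs (f r)) (Rabs_pos_lt _ Hne)) as [d [Hd Hy]].
    assert (E (r + d/2)).
    { split; [lra|]. intros y Hy'. destruct (Rlt_le_dec y r).
      - apply Hbelow; lra.
      - intro H0. specialize (Hy y). rewrite H0 in Hy.
        rewrite Rminus_0_l, Rabs_Ropp in Hy. assert (Rabs (y - r) < d).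
        { rewrite Rabs_pos_eq; lra. }
        specialize (Hy H). lra. }
    specialize (Hub _ H). lra. }
  exists r; repeat split; auto.
  destruct (Req_dec a r) as [<-|]; [contradiction|lra].
Qed.

Lemma sign_pos (f : R -> R) a r : continuity f -> 0 < f a ->
  (forall y, a <= y < r -> f y <> 0) -> forall y, a <= y < r -> 0 < f y.
Proof.
  intros Hc Ha Hn y Hy. destruct (Rlt_le_dec 0 (f y)); auto.
  destruct (IVT_cor f a y Hc) as [c [Hc1 Hc2]]; [lra| nra |].
  exfalso. apply (Hn c); [lra|auto].
Qed.

Lemma sign_neg (f : R -> R) a r : continuity f -> f a < 0 ->
  (forall y, a <= y < r -> f y <> 0) -> forall y, a <= y < r -> f y < 0.
Proof.
  intros Hc Ha Hn y Hy. destruct (Rlt_le_dec (f y) 0); auto.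
  destruct (IVT_cor f a y Hc) as [c [Hc1 Hc2]]; [lra| nra |].
  exfalso. apply (Hn c); [lra|auto].
Qed.

Lemma decr_le (f df : R -> R) a b : a <= b ->
  (forall x, a <= x <= b -> is_derive f x (df x)) ->
  (forall x, a <= x <= b -> df x <= 0) -> f b <= f a.
Proof.
  intros Hab Hd Hp. destruct (Req_dec a b) as [<-|Hne]; [lra|].
  destruct (mvt f df a b) as [c [Hc E]]; try lra; auto.
  assert (df c <= 0) by (apply Hp; lra). nra.
Qed.

Lemma decr_lt (f df : R -> R) a b : a < b ->
  (forall x, a <= x <= b -> is_derive f x (df x)) ->
  (forall x, a <= x <= b -> df x < 0) -> f b < f a.
Proof.
  intros Hab Hd Hp.
  destruct (mvt f df a b) as [c [Hc E]]; try lra; auto.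
  assert (df c < 0) by (apply Hp; lra). nra.
Qed.

Lemma sign_pos_c (f : R -> R) a r : continuity f ->
  (forall y, a <= y <= r -> f y <> 0) -> 0 < f a -> forall y, a <= y <= r -> 0 < f y.
Proof.
  intros Hc Hn Ha y Hy. destruct (Rlt_le_dec 0 (f y)); auto.
  destruct (IVT_cor f a y Hc) as [c [Hc1 Hc2]]; [lra| nra |].
  exfalso. apply (Hn c); [lra|auto].
Qed.

Lemma sign_neg_c (f : R -> R) a r : continuity f ->
  (forall y, a <= y <= r -> f y <> 0) -> f a < 0 -> forall y, a <= y <= r -> f y < 0.
Proof.
  intros Hc Hn Ha y Hy. destruct (Rlt_le_dec (f y) 0); auto.
  destruct (IVT_cor f a y Hc) as [c [Hc1 Hc2]]; [lra| nra |].
  exfalso. apply (Hn c); [lra|auto].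
Qed.


Definition C0 s := (exp s + exp (-s))/4 + cos s/2.
Definition C1 s := (exp s - exp (-s))/4 + sin s/2.
Definition C2 s := (exp s + exp (-s))/4 - cos s/2.
Definition C3 s := (exp s - exp (-s))/4 - sin s/2.
Definition Wf (c0 c1 c2 c3 : R) (s : R) := c0 * C0 s + c1 * C1 s + c2 * C2 s + c3 * C3 s.

Lemma Wf_derive c0 c1 c2 c3 s : is_derive (Wf c0 c1 c2 c3) s (Wf c1 c2 c3 c0 s).
Proof.
  unfold Wf, C0, C1, C2, C3. auto_derive; auto. unfold Rdiv, Rminus. ring.
Qed.

Lemma Wf_0 c0 c1 c2 c3 : Wf c0 c1 c2 c3 0 = c0.
Proof. unfold Wf, C0, C1, C2, C3. rewrite Ropp_0, exp_0, cos_0, sin_0. field. Qed.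

Lemma Wf_cont c0 c1 c2 c3 : continuity (Wf c0 c1 c2 c3).
Proof. intros x. eapply derivable_continuous_pt. exists (Wf c1 c2 c3 c0 x). apply is_derive_Reals, Wf_derive. Qed.

Lemma Wf_sub c0 c1 c2 c3 d0 d1 d2 d3 s :
  Wf c0 c1 c2 c3 s - Wf d0 d1 d2 d3 s = Wf (c0-d0) (c1-d1) (c2-d2) (c3-d3) s.
Proof. unfold Wf; ring. Qed.

Lemma C_bound_aux s : 0 <= s -> (exp s + exp (-s))/4 + 1/2 <= exp s.
Proof.
  intros Hs. assert (exp (-s) <= 1). { rewrite <- exp_0. destruct (Req_dec s 0); [subst; rewrite Ropp_0; lra|]. left; apply exp_increasing; lra. }
  assert (1 <= exp s). { rewrite <- exp_0. destruct (Req_dec s 0); [subst; lra|]. left; apply exp_increasing; lra. }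
  lra.
Qed.

Lemma C_bounds s : 0 <= s ->
  Rabs (C0 s) <= exp s /\ Rabs (C1 s) <= exp s /\ Rabs (C2 s) <= exp s /\ Rabs (C3 s) <= exp s.
Proof.
  intros Hs. pose proof (C_bound_aux s Hs). pose proof (COS_bound s). pose proof (SIN_bound s).
  pose proof (exp_pos s). pose proof (exp_pos (-s)).
  unfold C0, C1, C2, C3. repeat split; apply Rabs_le; lra.
Qed.

Lemma Wf_bound c0 c1 c2 c3 s : 0 <= s ->
  Rabs (Wf c0 c1 c2 c3 s) <= (Rabs c0 + Rabs c1 + Rabs c2 + Rabs c3) * exp s.
Proof.
  intros Hs. destruct (C_bounds s Hs) as [H0 [H1 [H2 H3]]]. unfold Wf.
  pose proof (Rabs_triang (c0 * C0 s + c1 * C1 s + c2 * C2 s) (c3 * C3 s)).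
  pose proof (Rabs_triang (c0 * C0 s + c1 * C1 s) (c2 * C2 s)).
  pose proof (Rabs_triang (c0 * C0 s) (c1 * C1 s)).
  rewrite !Rabs_mult in *.
  pose proof (Rabs_pos c0); pose proof (Rabs_pos c1); pose proof (Rabs_pos c2); pose proof (Rabs_pos c3).
  assert (Rabs c0 * Rabs (C0 s) <= Rabs c0 * exp s) by (apply Rmult_le_compat_l; auto).
  assert (Rabs c1 * Rabs (C1 s) <= Rabs c1 * exp s) by (apply Rmult_le_compat_l; auto).
  assert (Rabs c2 * Rabs (C2 s) <= Rabs c2 * exp s) by (apply Rmult_le_compat_l; auto).
  assert (Rabs c3 * Rabs (C3 s) <= Rabs c3 * exp s) by (apply Rmult_le_compat_l; auto).
  lra.
Qed.


Definition F0 g0 g1 g2 g3 m := Wf g0 (g1*m) (g2*(m*m)) (g3*(m*m*m)).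
Definition F1 g0 g1 g2 g3 m := Wf (g1*m) (g2*(m*m)) (g3*(m*m*m)) g0.
Definition F2 g0 g1 g2 g3 m := Wf (g2*(m*m)) (g3*(m*m*m)) g0 (g1*m).
Definition F3 g0 g1 g2 g3 m := Wf (g3*(m*m*m)) g0 (g1*m) (g2*(m*m)).

Lemma dF0 g0 g1 g2 g3 m s : is_derive (F0 g0 g1 g2 g3 m) s (F1 g0 g1 g2 g3 m s).
Proof. apply Wf_derive. Qed.
Lemma dF1 g0 g1 g2 g3 m s : is_derive (F1 g0 g1 g2 g3 m) s (F2 g0 g1 g2 g3 m s).
Proof. apply Wf_derive. Qed.
Lemma dF2 g0 g1 g2 g3 m s : is_derive (F2 g0 g1 g2 g3 m) s (F3 g0 g1 g2 g3 m s).
Proof. apply Wf_derive. Qed.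
Lemma dF3 g0 g1 g2 g3 m s : is_derive (F3 g0 g1 g2 g3 m) s (F0 g0 g1 g2 g3 m s).
Proof. apply Wf_derive. Qed.

Definition PA g0 g1 g2 g3 m := exists r, 0 < r /\ F1 g0 g1 g2 g3 m r = 0 /\
  (forall s, 0 <= s < r -> 0 < F1 g0 g1 g2 g3 m s) /\ (forall s, 0 <= s <= r -> F3 g0 g1 g2 g3 m s < 0).
Definition PC g0 g1 g2 g3 m := exists r, 0 < r /\ F3 g0 g1 g2 g3 m r = 0 /\
  (forall s, 0 <= s < r -> F3 g0 g1 g2 g3 m s < 0) /\ (forall s, 0 <= s <= r -> 0 < F1 g0 g1 g2 g3 m s).

Lemma PA_PC g0 g1 g2 g3 m : PA g0 g1 g2 g3 m -> PC g0 g1 g2 g3 m -> False.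
Proof.
  intros [r1 [H1 [H2 [H3 H4]]]] [r3 [K1 [K2 [K3 K4]]]].
  destruct (Rle_lt_dec r1 r3).
  - specialize (K4 r1). lra.
  - specialize (H4 r3). lra.
Qed.

Lemma coef_close g1 g2 g3 m0 eps : 0 < eps -> exists d, 0 < d /\ forall m, Rabs (m - m0) < d ->
  Rabs (g1*m - g1*m0) + Rabs (g2*(m*m) - g2*(m0*m0)) + Rabs (g3*(m*m*m) - g3*(m0*m0*m0)) < eps.
Proof.
  intros He.
  assert (Hc1 : continuity_pt (fun m => g1*m) m0) by (eapply dcont; auto_derive; auto).
  assert (Hc2 : continuity_pt (fun m => g2*(m*m)) m0) by (eapply dcont; auto_derive; auto).
  assert (Hc3 : continuity_pt (fun m => g3*(m*m*m)) m0) by (eapply dcont; auto_derive; auto).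
  destruct (cont_ed _ _ Hc1 (eps/3)) as [d1 [Hd1 H1]]; [lra|].
  destruct (cont_ed _ _ Hc2 (eps/3)) as [d2 [Hd2 H2]]; [lra|].
  destruct (cont_ed _ _ Hc3 (eps/3)) as [d3 [Hd3 H3]]; [lra|].
  exists (Rmin d1 (Rmin d2 d3)). split.
  - apply Rmin_pos; auto; apply Rmin_pos; auto.
  - intros m Hm. pose proof (Rmin_l d1 (Rmin d2 d3)). pose proof (Rmin_r d1 (Rmin d2 d3)).
    pose proof (Rmin_l d2 d3). pose proof (Rmin_r d2 d3).
    specialize (H1 m ltac:(lra)). specialize (H2 m ltac:(lra)). specialize (H3 m ltac:(lra)).
    simpl in *. lra.
Qed.

Lemma F_close g0 g1 g2 g3 m0 S eps : 0 < eps -> exists d, 0 < d /\ forall m, Rabs (m - m0) < d ->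
  forall s, 0 <= s <= S ->
  Rabs (F1 g0 g1 g2 g3 m s - F1 g0 g1 g2 g3 m0 s) < eps /\
  Rabs (F3 g0 g1 g2 g3 m s - F3 g0 g1 g2 g3 m0 s) < eps.
Proof.
  intros He. pose proof (exp_pos S) as HS.
  destruct (coef_close g1 g2 g3 m0 (eps / exp S)) as [d [Hd H]].
  { apply Rdiv_lt_0_compat; auto. }
  exists d; split; auto. intros m Hm s Hs.
  specialize (H m Hm).
  assert (Hes : exp s <= exp S).
  { destruct (Req_dec s S) as [->|]; [lra|]. left; apply exp_increasing; lra. }
  assert (Hq : (Rabs (g1*m - g1*m0) + Rabs (g2*(m*m) - g2*(m0*m0)) + Rabs (g3*(m*m*m) - g3*(m0*m0*m0))) * exp s < eps).
  { apply Rle_lt_trans with ((Rabs (g1*m - g1*m0) + Rabs (g2*(m*m) - g2*(m0*m0)) + Rabs (g3*(m*m*m) - g3*(m0*m0*m0))) * exp S).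
    - apply Rmult_le_compat_l; auto. pose proof (Rabs_pos (g1*m - g1*m0)); pose proof (Rabs_pos (g2*(m*m) - g2*(m0*m0))); pose proof (Rabs_pos (g3*(m*m*m) - g3*(m0*m0*m0))); lra.
    - apply (Rmult_lt_compat_r (exp S)) in H; auto. replace (eps / exp S * exp S) with eps in H by (field; lra). lra. }
  unfold F1, F3. rewrite !Wf_sub. replace (g0 - g0) with 0 by ring.
  split; (eapply Rle_lt_trans; [apply Wf_bound; lra|]); rewrite Rabs_R0; lra.
Qed.


Lemma F1_0 g0 g1 g2 g3 m : F1 g0 g1 g2 g3 m 0 = g1 * m.
Proof. apply Wf_0. Qed.
Lemma F3_0 g0 g1 g2 g3 m : F3 g0 g1 g2 g3 m 0 = g3 * (m*m*m).
Proof. apply Wf_0. Qed.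
Lemma F0_0 g0 g1 g2 g3 m : F0 g0 g1 g2 g3 m 0 = g0.
Proof. apply Wf_0. Qed.
Lemma F2_0 g0 g1 g2 g3 m : F2 g0 g1 g2 g3 m 0 = g2 * (m*m).
Proof. apply Wf_0. Qed.
Lemma cF0 g0 g1 g2 g3 m : continuity (F0 g0 g1 g2 g3 m). Proof. apply Wf_cont. Qed.
Lemma cF1 g0 g1 g2 g3 m : continuity (F1 g0 g1 g2 g3 m). Proof. apply Wf_cont. Qed.
Lemma cF2 g0 g1 g2 g3 m : continuity (F2 g0 g1 g2 g3 m). Proof. apply Wf_cont. Qed.
Lemma cF3 g0 g1 g2 g3 m : continuity (F3 g0 g1 g2 g3 m). Proof. apply Wf_cont. Qed.

Lemma PA_open g0 g1 g2 g3 m0 : 0 < g1 -> PA g0 g1 g2 g3 m0 ->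
  exists d, 0 < d /\ forall m, 0 < m -> Rabs (m - m0) < d -> PA g0 g1 g2 g3 m.
Proof.
  intros hg1 [r [Hr [H1r [H1 H3]]]].
  set (f1 := F1 g0 g1 g2 g3 m0) in *. set (f2 := F2 g0 g1 g2 g3 m0).
  set (f3 := F3 g0 g1 g2 g3 m0) in *.
  assert (H3r : f3 r < 0) by (apply H3; lra).
  destruct (cont_ed f3 r (cF3 _ _ _ _ _ r) (- f3 r / 2)) as [d1 [Hd1 Hc]]; [lra|].
  set (T := r + d1/2).
  assert (H3T : forall s, 0 <= s <= T -> f3 s < 0).
  { intros s Hs. destruct (Rle_lt_dec s r); [apply H3; lra|].
    assert (Rabs (s - r) < d1) by (rewrite Rabs_pos_eq; unfold T in *; lra).
    specialize (Hc s H). apply Rabs_def2 in Hc. lra. }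
  destruct (continuity_ab_maj f3 0 T) as [Mx [HM HMx]]; [unfold T; lra| intros; apply cF3|].
  assert (HMn : f3 Mx < 0) by (apply H3T; auto).
  assert (H2r : f2 r <= 0).
  { destruct (Rle_lt_dec (f2 r) 0); auto. exfalso.
    destruct (mvt f1 f2 (r/2) r) as [c [Hc1 Hc2]]; [lra| intros; apply dF1|].
    assert (f2 r <= f2 c).
    { apply (decr_le f2 f3 c r); [lra| intros; apply dF2| intros; left; apply H3T; unfold T; lra]. }
    assert (0 < f1 (r/2)) by (apply H1; lra). nra. }
  assert (H1T : f1 T < 0).
  { destruct (mvt f1 f2 r T) as [c [Hc1 Hc2]]; [unfold T; lra| intros; apply dF1|].
    assert (f2 c < f2 r).
    { apply (decr_lt f2 f3 r c); [lra| intros; apply dF2| intros; apply H3T; lra]. }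
    unfold T in *. nra. }
  destruct (F_close g0 g1 g2 g3 m0 T (Rmin (- f3 Mx) (- f1 T))) as [d [Hd Hcl]].
  { apply Rmin_pos; lra. }
  exists d; split; auto. intros m Hm Hmd.
  pose proof (Rmin_l (- f3 Mx) (- f1 T)). pose proof (Rmin_r (- f3 Mx) (- f1 T)).
  assert (K3 : forall s, 0 <= s <= T -> F3 g0 g1 g2 g3 m s < 0).
  { intros s Hs. destruct (Hcl m Hmd s Hs) as [_ Hb]. apply Rabs_def2 in Hb.
    specialize (HM s Hs). fold f3 in Hb. lra. }
  assert (K1T : F1 g0 g1 g2 g3 m T < 0).
  { destruct (Hcl m Hmd T) as [Hb _]; [unfold T; lra|]. apply Rabs_def2 in Hb. fold f1 in Hb. lra. }
  assert (K10 : 0 < F1 g0 g1 g2 g3 m 0) by (rewrite F1_0; nra).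
  destruct (IVT_cor (F1 g0 g1 g2 g3 m) 0 T (cF1 _ _ _ _ _)) as [z [Hz1 Hz2]]; [unfold T; lra| nra|].
  assert (Hz0 : 0 < z) by (destruct (Req_dec z 0) as [->|]; lra).
  destruct (first_zero_ex (F1 g0 g1 g2 g3 m) 0 z) as [r' [Hr1 [Hr2 [Hr3 Hr4]]]]; auto; [intros; apply cF1| lra|].
  exists r'. repeat split; auto.
  - intros s Hs. apply (sign_pos _ 0 r'); auto. apply cF1.
  - intros s Hs. apply K3. lra.
Qed.

Lemma PC_open g0 g1 g2 g3 m0 : 0 < g0 -> g3 < 0 -> PC g0 g1 g2 g3 m0 ->
  exists d, 0 < d /\ forall m, 0 < m -> Rabs (m - m0) < d -> PC g0 g1 g2 g3 m.
Proof.
  intros hg0 hg3 [r [Hr [H3r [H3 H1]]]].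
  set (f1 := F1 g0 g1 g2 g3 m0) in *. set (f0 := F0 g0 g1 g2 g3 m0).
  set (f3 := F3 g0 g1 g2 g3 m0) in *.
  assert (H1r : 0 < f1 r) by (apply H1; lra).
  destruct (cont_ed f1 r (cF1 _ _ _ _ _ r) (f1 r / 2)) as [d1 [Hd1 Hc]]; [lra|].
  set (T := r + d1/2).
  assert (H1T : forall s, 0 <= s <= T -> 0 < f1 s).
  { intros s Hs. destruct (Rle_lt_dec s r); [apply H1; lra|].
    assert (Rabs (s - r) < d1) by (rewrite Rabs_pos_eq; unfold T in *; lra).
    specialize (Hc s H). apply Rabs_def2 in Hc. lra. }
  destruct (continuity_ab_maj (fun s => - f1 s) 0 T) as [Mx [HM HMx]]; [unfold T; lra| intros; apply continuity_pt_opp, cF1|].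
  assert (HMn : 0 < f1 Mx) by (apply H1T; auto).
  assert (H0T : forall s, 0 <= s <= T -> 0 < f0 s).
  { intros s Hs. assert (f0 0 <= f0 s).
    { apply (incr_le f0 f1 0 s); [lra| intros; apply dF0| intros; left; apply H1T; lra]. }
    unfold f0 in *. rewrite F0_0 in H. lra. }
  assert (H3T : 0 < f3 T).
  { assert (f3 r < f3 T).
    { apply (incr_lt f3 f0 r T); [unfold T; lra| intros; apply dF3| intros; apply H0T; unfold T in *; lra]. }
    lra. }
  destruct (F_close g0 g1 g2 g3 m0 T (Rmin (f1 Mx) (f3 T))) as [d [Hd Hcl]].
  { apply Rmin_pos; lra. }
  exists d; split; auto. intros m Hm Hmd.
  pose proof (Rmin_l (f1 Mx) (f3 T)). pose proof (Rmin_r (f1 Mx) (f3 T)).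
  assert (K1 : forall s, 0 <= s <= T -> 0 < F1 g0 g1 g2 g3 m s).
  { intros s Hs. destruct (Hcl m Hmd s Hs) as [Hb _]. apply Rabs_def2 in Hb.
    specialize (HM s Hs). simpl in HM. fold f1 in Hb. lra. }
  assert (K3T : 0 < F3 g0 g1 g2 g3 m T).
  { destruct (Hcl m Hmd T) as [_ Hb]; [unfold T; lra|]. apply Rabs_def2 in Hb. fold f3 in Hb. lra. }
  assert (K30 : F3 g0 g1 g2 g3 m 0 < 0).
  { rewrite F3_0. assert (0 < m*m*m) by (repeat apply Rmult_lt_0_compat; auto). nra. }
  destruct (IVT_cor (F3 g0 g1 g2 g3 m) 0 T (cF3 _ _ _ _ _)) as [z [Hz1 Hz2]]; [unfold T; lra| nra|].
  assert (Hz0 : 0 < z) by (destruct (Req_dec z 0) as [->|]; lra).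
  destruct (first_zero_ex (F3 g0 g1 g2 g3 m) 0 z) as [r' [Hr1 [Hr2 [Hr3 Hr4]]]]; auto; [intros; apply cF3| lra|].
  exists r'. repeat split; auto.
  - intros s Hs. apply (sign_neg _ 0 r'); auto. apply cF3.
  - intros s Hs. apply K1. lra.
Qed.


Lemma cmp_le (f df g dg : R -> R) a b : a <= b ->
  (forall x, a <= x <= b -> is_derive f x (df x)) ->
  (forall x, a <= x <= b -> is_derive g x (dg x)) ->
  (forall x, a <= x <= b -> dg x <= df x) -> g b - g a <= f b - f a.
Proof.
  intros Hab Hf Hg Hd.
  assert (H : (fun x => f x - g x) a <= (fun x => f x - g x) b).
  { apply (incr_le (fun x => f x - g x) (fun x => df x - dg x) a b); auto.
    - intros x Hx. apply (is_derive_minus f g); auto.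
    - intros x Hx. specialize (Hd x Hx). lra. }
  simpl in H. lra.
Qed.

Lemma PC_small g0 g1 g2 g3 : 0 < g0 -> 0 < g1 -> g2 < 0 -> g3 < 0 ->
  exists m, 0 < m /\ m < 1 /\ PC g0 g1 g2 g3 m.
Proof.
  intros hg0 hg1 hg2 hg3.
  set (m := Rmin 1 (Rmin (g0 / (- g3)) (g1 / (- (g2 + g3)))) / 2).
  assert (Hq1 : 0 < g0 / (- g3)) by (apply Rdiv_lt_0_compat; lra).
  assert (Hq2 : 0 < g1 / (- (g2 + g3))) by (apply Rdiv_lt_0_compat; lra).
  assert (Hmin : 0 < Rmin 1 (Rmin (g0 / (- g3)) (g1 / (- (g2 + g3))))).
  { apply Rmin_pos; [lra| apply Rmin_pos; auto]. }
  pose proof (Rmin_l 1 (Rmin (g0 / (- g3)) (g1 / (- (g2 + g3))))).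
  pose proof (Rmin_r 1 (Rmin (g0 / (- g3)) (g1 / (- (g2 + g3))))).
  pose proof (Rmin_l (g0 / (- g3)) (g1 / (- (g2 + g3)))).
  pose proof (Rmin_r (g0 / (- g3)) (g1 / (- (g2 + g3)))).
  assert (Hm0 : 0 < m) by (unfold m; lra).
  assert (Hm1 : m <= 1/2) by (unfold m; lra).
  assert (Hma : m < g0 / (- g3)) by (unfold m; lra).
  assert (Hmb : m < g1 / (- (g2 + g3))) by (unfold m; lra).
  assert (Ha : - g3 * m < g0).
  { apply (Rmult_lt_compat_l (- g3)) in Hma; [|lra]. replace (- g3 * (g0 / - g3)) with g0 in Hma by (field; lra). lra. }
  assert (Hb : - (g2 + g3) * m < g1).
  { apply (Rmult_lt_compat_l (- (g2+g3))) in Hmb; [|lra]. replace (- (g2+g3) * (g1 / - (g2+g3))) with g1 in Hmb by (field; lra). lra. }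
  clearbody m.
  set (a1 := g1 * m). set (a2 := g2 * (m*m)). set (a3 := g3 * (m*m*m)).
  assert (Hp : forall s, 0 <= s <= m -> 0 < a1 + a2 * s + a3 * (s*s) / 2).
  { intros s Hs. unfold a1, a2, a3.
    assert (Mm : 0 <= m * m) by nra.
    assert (E1 : m * m * s <= m * m).
    { rewrite <- (Rmult_1_r (m*m)) at 2. apply Rmult_le_compat_l; lra. }
    assert (Ss : s * s <= 1) by nra.
    assert (E2' : m * (s * s) / 2 <= 1) by nra.
    assert (E2 : m * m * m * (s * s) / 2 <= m * m).
    { replace (m * m * m * (s * s) / 2) with (m * m * (m * (s * s) / 2)) by field.
      rewrite <- (Rmult_1_r (m*m)) at 2. apply Rmult_le_compat_l; lra. }
    assert (E3 : g2 * (m*m) * s >= g2 * (m*m)).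
    { replace (g2 * (m*m) * s) with (g2 * (m*m*s)) by ring. apply Rle_ge, Rmult_le_compat_neg_l; lra. }
    assert (E4 : g3 * (m*m*m) * (s*s) / 2 >= g3 * (m*m)).
    { replace (g3 * (m*m*m) * (s*s) / 2) with (g3 * (m*m*m*(s*s)/2)) by field. apply Rle_ge, Rmult_le_compat_neg_l; lra. }
    assert (E5 : 0 < m * (g1 + (g2 + g3) * m)) by nra.
    nra. }
  set (f0 := F0 g0 g1 g2 g3 m). set (f1 := F1 g0 g1 g2 g3 m). set (f2 := F2 g0 g1 g2 g3 m). set (f3 := F3 g0 g1 g2 g3 m).
  assert (Q10 : 0 < f1 0) by (unfold f1; rewrite F1_0; nra).
  assert (Q1 : forall s, 0 <= s <= m -> 0 < f1 s).
  { destruct (classic (exists z, 0 < z <= m /\ f1 z = 0)) as [[z [Hz1 Hz2]]|Hn].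
    - exfalso.
      destruct (first_zero_ex f1 0 z) as [rho [Hr1 [Hr2 [Hr3 Hr4]]]]; auto; [intros; apply cF1| lra| lra|].
      assert (P1 : forall s, 0 <= s <= rho -> 0 <= f1 s).
      { intros s Hs. destruct (Req_dec s rho) as [->|]; [lra|]. left. apply (sign_pos f1 0 rho); auto; [apply cF1|lra]. }
      assert (P0 : forall s, 0 <= s <= rho -> 0 < f0 s).
      { intros s Hs. assert (f0 0 <= f0 s) by (apply (incr_le f0 f1 0 s); [lra| intros; apply dF0| intros; apply P1; lra]).
        unfold f0 in *; rewrite F0_0 in H3; lra. }
      assert (P3 : forall s, 0 <= s <= rho -> a3 <= f3 s).
      { intros s Hs. assert (f3 0 <= f3 s) by (apply (incr_le f3 f0 0 s); [lra| intros; apply dF3| intros; left; apply P0; lra]).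
        unfold f3 in *; rewrite F3_0 in H3; unfold a3; lra. }
      assert (P2 : forall s, 0 <= s <= rho -> a2 + a3 * s <= f2 s).
      { intros s Hs. assert ((fun x => a3 * x) s - (fun x => a3 * x) 0 <= f2 s - f2 0).
        { apply (cmp_le f2 f3 (fun x => a3 * x) (fun _ => a3) 0 s); [lra| intros; apply dF2| intros; auto_derive; auto; ring| intros; apply P3; lra]. }
        unfold f2 in *; rewrite F2_0 in H3; unfold a2; simpl in H3; lra. }
      assert ((fun x => a2 * x + a3 * (x*x)/2) rho - (fun x => a2 * x + a3 * (x*x)/2) 0 <= f1 rho - f1 0).
      { apply (cmp_le f1 f2 (fun x => a2 * x + a3 * (x*x)/2) (fun x => a2 + a3 * x) 0 rho); [lra| intros; apply dF1| intros; auto_derive; auto; field| intros; apply P2; lra]. }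
      simpl in H3. unfold f1 in H3 at 2. rewrite F1_0 in H3. fold a1 in H3.
      specialize (Hp rho ltac:(lra)). lra.
    - apply (sign_pos_c f1 0 m); auto; [apply cF1|].
      intros y Hy Hy0. destruct (Req_dec y 0) as [->|]; [lra|].
      apply Hn. exists y. split; [lra|auto]. }
  assert (Q0 : forall s, 0 <= s <= m -> g0 <= f0 s).
  { intros s Hs. assert (f0 0 <= f0 s) by (apply (incr_le f0 f1 0 s); [lra| intros; apply dF0| intros; left; apply Q1; lra]).
    unfold f0 in *; rewrite F0_0 in H3; lra. }
  assert (Q3 : 0 < f3 m).
  { assert ((fun x => g0 * x) m - (fun x => g0 * x) 0 <= f3 m - f3 0).
    { apply (cmp_le f3 f0 (fun x => g0 * x) (fun _ => g0) 0 m); [lra| intros; apply dF3| intros; auto_derive; auto; ring| intros; apply Q0; lra]. }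
    simpl in H3. unfold f3 in H3 at 2. rewrite F3_0 in H3.
    assert (g3 * (m*m*m) + g0 * m > 0).
    { assert (m * m <= m) by nra. assert (- g3 * (m*m) < g0) by nra. nra. }
    lra. }
  assert (Q30 : f3 0 < 0).
  { unfold f3; rewrite F3_0. assert (0 < m*m*m) by (repeat apply Rmult_lt_0_compat; auto). nra. }
  destruct (IVT_cor f3 0 m (cF3 _ _ _ _ _)) as [z [Hz1 Hz2]]; [lra| nra|].
  assert (Hz0 : 0 < z) by (destruct (Req_dec z 0) as [->|]; lra).
  destruct (first_zero_ex f3 0 z) as [r' [Hr1 [Hr2 [Hr3 Hr4]]]]; auto; [intros; apply cF3| lra|].
  exists m. split; [lra|split; [lra|]].
  exists r'. repeat split; auto.
  - intros s Hs. apply (sign_neg f3 0 r'); auto. apply cF3.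
  - intros s Hs. apply Q1. lra.
Qed.

Lemma PA_large g0 g1 g2 g3 : 0 < g0 -> 0 < g1 -> g2 < 0 -> g3 < 0 ->
  exists m, 1 < m /\ PA g0 g1 g2 g3 m.
Proof.
  intros hg0 hg1 hg2 hg3.
  set (c2 := 2 * g1 / (- g2)). set (c1 := g1 * c2).
  assert (Hc2 : 0 < c2) by (unfold c2; apply Rdiv_lt_0_compat; lra).
  assert (Hc1 : 0 < c1) by (unfold c1; nra).
  set (K := (g0 + c1) * c2 / (- g3)).
  set (m := Rmax 1 K + 1).
  pose proof (Rmax_l 1 K). pose proof (Rmax_r 1 K).
  assert (Hm1 : 2 <= m) by (unfold m; lra).
  assert (HmK : K < m) by (unfold m; lra).
  assert (HK : (g0 + c1) * c2 < - g3 * m).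
  { apply (Rmult_lt_compat_l (- g3)) in HmK; [|lra]. unfold K in HmK.
    replace (- g3 * ((g0 + c1) * c2 / - g3)) with ((g0 + c1) * c2) in HmK by (field; lra). lra. }
  clearbody m.
  set (T := c2 / m).
  assert (HT : 0 < T) by (unfold T; apply Rdiv_lt_0_compat; lra).
  set (a1 := g1 * m). set (a2 := g2 * (m*m)). set (a3 := g3 * (m*m*m)).
  assert (Ha1T : a1 * T = c1) by (unfold a1, T, c1; field; lra).
  assert (Ha2T : a2 * T = - 2 * g1 * m) by (unfold a2, T, c2; field; lra).
  assert (Hkey : a3 + (g0 + a1 * T) * T < 0).
  { rewrite Ha1T. unfold a3, T.
    assert (M2 : m * m >= 1) by nra. assert (M3 : m * m * m >= 1) by nra.
    assert (M4 : m * m * m * m >= m) by nra.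
    assert ((g0 + c1) * c2 < - g3 * (m*m*m*m)).
    { assert (- g3 * m <= - g3 * (m*m*m*m)) by (apply Rmult_le_compat_l; lra). lra. }
    apply (Rmult_lt_reg_r m); [lra|].
    replace ((g3 * (m * m * m) + (g0 + c1) * (c2 / m)) * m) with (g3 * (m*m*m*m) + (g0 + c1) * c2) by (field; lra).
    lra. }
  set (f0 := F0 g0 g1 g2 g3 m). set (f1 := F1 g0 g1 g2 g3 m). set (f2 := F2 g0 g1 g2 g3 m). set (f3 := F3 g0 g1 g2 g3 m).
  assert (Q30 : f3 0 < 0).
  { unfold f3; rewrite F3_0. assert (0 < m*m*m) by (repeat apply Rmult_lt_0_compat; lra). nra. }
  assert (Q3 : forall s, 0 <= s <= T -> f3 s < 0).
  { destruct (classic (exists z, 0 < z <= T /\ f3 z = 0)) as [[z [Hz1 Hz2]]|Hn].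
    - exfalso.
      destruct (first_zero_ex f3 0 z) as [rho [Hr1 [Hr2 [Hr3 Hr4]]]]; auto; [intros; apply cF3| lra| lra|].
      assert (P3 : forall s, 0 <= s <= rho -> f3 s <= 0).
      { intros s Hs. destruct (Req_dec s rho) as [->|]; [lra|]. left. apply (sign_neg f3 0 rho); auto; [apply cF3|lra]. }
      assert (P2 : forall s, 0 <= s <= rho -> f2 s <= a2).
      { intros s Hs. assert (f2 s <= f2 0) by (apply (decr_le f2 f3 0 s); [lra| intros; apply dF2| intros; apply P3; lra]).
        unfold f2 in *; rewrite F2_0 in H1; unfold a2; lra. }
      assert (P1 : forall s, 0 <= s <= rho -> f1 s <= a1).
      { intros s Hs. assert (f1 s - f1 0 <= (fun x => a2 * x) s - (fun x => a2 * x) 0).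
        { apply (cmp_le (fun x => a2 * x) (fun _ => a2) f1 f2 0 s); [lra| intros; auto_derive; auto; ring| intros; apply dF1| intros; apply P2; lra]. }
        simpl in H1. unfold f1 in H1 at 2. rewrite F1_0 in H1. fold a1 in H1.
        assert (a2 < 0) by (unfold a2; assert (0 < m*m) by nra; nra).
        assert (a2 * s <= 0) by nra. lra. }
      assert (P0 : forall s, 0 <= s <= rho -> f0 s <= g0 + a1 * rho).
      { intros s Hs. assert (f0 s - f0 0 <= (fun x => a1 * x) s - (fun x => a1 * x) 0).
        { apply (cmp_le (fun x => a1 * x) (fun _ => a1) f0 f1 0 s); [lra| intros; auto_derive; auto; ring| intros; apply dF0| intros; apply P1; lra]. }
        simpl in H1. unfold f0 in H1 at 2. rewrite F0_0 in H1.
        assert (0 < a1) by (unfold a1; nra).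
        assert (a1 * s <= a1 * rho) by (apply Rmult_le_compat_l; lra). lra. }
      assert (f3 rho - f3 0 <= (fun x => (g0 + a1 * rho) * x) rho - (fun x => (g0 + a1 * rho) * x) 0).
      { apply (cmp_le (fun x => (g0 + a1 * rho) * x) (fun _ => g0 + a1 * rho) f3 f0 0 rho); [lra| intros; auto_derive; auto; ring| intros; apply dF3| intros; apply P0; lra]. }
      simpl in H1. unfold f3 in H1 at 2. rewrite F3_0 in H1. fold a3 in H1.
      assert (0 < a1) by (unfold a1; nra).
      assert ((g0 + a1 * rho) * rho <= (g0 + a1 * T) * T).
      { apply Rmult_le_compat; nra. }
      lra.
    - apply (sign_neg_c f3 0 T); auto; [apply cF3|].
      intros y Hy Hy0. destruct (Req_dec y 0) as [->|]; [lra|].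
      apply Hn. exists y. split; [lra|auto]. }
  assert (Q2 : forall s, 0 <= s <= T -> f2 s <= a2).
  { intros s Hs. assert (f2 s <= f2 0) by (apply (decr_le f2 f3 0 s); [lra| intros; apply dF2| intros; left; apply Q3; lra]).
    unfold f2 in *; rewrite F2_0 in H1; unfold a2; lra. }
  assert (Q1T : f1 T < 0).
  { assert (f1 T - f1 0 <= (fun x => a2 * x) T - (fun x => a2 * x) 0).
    { apply (cmp_le (fun x => a2 * x) (fun _ => a2) f1 f2 0 T); [lra| intros; auto_derive; auto; ring| intros; apply dF1| intros; apply Q2; lra]. }
    simpl in H1. unfold f1 in H1 at 2. rewrite F1_0 in H1. fold a1 in H1.
    unfold a1 in *. nra. }
  assert (Q10 : 0 < f1 0) by (unfold f1; rewrite F1_0; nra).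
  destruct (IVT_cor f1 0 T (cF1 _ _ _ _ _)) as [z [Hz1 Hz2]]; [lra| nra|].
  assert (Hz0 : 0 < z) by (destruct (Req_dec z 0) as [->|]; lra).
  destruct (first_zero_ex f1 0 z) as [r' [Hr1 [Hr2 [Hr3 Hr4]]]]; auto; [intros; apply cF1| lra|].
  exists m. split; [lra|].
  exists r'. repeat split; auto.
  - intros s Hs. apply (sign_pos f1 0 r'); auto. apply cF1.
  - intros s Hs. apply Q3. lra.
Qed.


Lemma crit g0 g1 g2 g3 : 0 < g0 -> 0 < g1 -> g2 < 0 -> g3 < 0 ->
  exists m, 0 < m /\ ~ PA g0 g1 g2 g3 m /\ ~ PC g0 g1 g2 g3 m.
Proof.
  intros hg0 hg1 hg2 hg3.
  destruct (PC_small g0 g1 g2 g3) as [ms [Hms0 [Hms1 HCs]]]; auto.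
  destruct (PA_large g0 g1 g2 g3) as [ml [Hml HAl]]; auto.
  set (E := fun x => ms <= x <= ml /\ forall y, ms <= y <= x -> PC g0 g1 g2 g3 y).
  assert (Hb : bound E) by (exists ml; intros x [Hx _]; lra).
  assert (He : exists x, E x).
  { exists ms. split; [lra|]. intros y Hy. replace y with ms by lra. auto. }
  destruct (completeness E Hb He) as [sg [Hub Hlub]].
  assert (Hs1 : ms <= sg) by (apply Hub; split; [lra|]; intros y Hy; replace y with ms by lra; auto).
  assert (Hs2 : sg <= ml) by (apply Hlub; intros x [Hx _]; lra).
  assert (Hbelow : forall y, ms <= y < sg -> PC g0 g1 g2 g3 y).
  { intros y Hy. destruct (classic (exists x, E x /\ y <= x)) as [[x [[Hx1 Hx2] Hyx]]|Hn].
    - apply Hx2; lra.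
    - exfalso. assert (sg <= y); [|lra]. apply Hlub. intros x Hx.
      destruct (Rle_lt_dec x y); auto. exfalso; apply Hn; exists x; split; auto; lra. }
  exists sg. split; [lra|split].
  - intros HA. destruct (PA_open g0 g1 g2 g3 sg hg1 HA) as [d [Hd Hop]].
    destruct (Req_dec sg ms) as [Heq|Hne].
    + rewrite Heq in HA. exact (PA_PC _ _ _ _ _ HA HCs).
    + set (y := Rmax ms (sg - d/2)).
      pose proof (Rmax_l ms (sg - d/2)). pose proof (Rmax_r ms (sg - d/2)).
      assert (y < sg) by (unfold y; apply Rmax_lub_lt; lra).
      apply (PA_PC g0 g1 g2 g3 y).
      * apply Hop; [unfold y in *; lra|]. rewrite Rabs_left; unfold y in *; lra.
      * apply Hbelow; unfold y in *; lra.
  - intros HC. destruct (PC_open g0 g1 g2 g3 sg hg0 hg3 HC) as [d [Hd Hop]].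
    set (x := Rmin (sg + d/2) ml).
    pose proof (Rmin_l (sg + d/2) ml). pose proof (Rmin_r (sg + d/2) ml).
    assert (Hx : E x).
    { split; [unfold x in *; split; [|lra]|].
      - apply Rmin_glb; lra.
      - intros y Hy. destruct (Rlt_le_dec y sg); [apply Hbelow; lra|].
        apply Hop; [lra|]. rewrite Rabs_pos_eq; unfold x in *; lra. }
    specialize (Hub x Hx).
    assert (Hxm : x = ml).
    { unfold x in *. destruct (Rle_lt_dec (sg + d/2) ml).
      - rewrite Rmin_left in Hub; lra.
      - rewrite Rmin_right; lra. }
    destruct Hx as [_ Hx]. apply (PA_PC g0 g1 g2 g3 ml HAl). apply Hx. lra.
Qed.


Lemma isd_mult (f g : R -> R) x df dg : is_derive f x df -> is_derive g x dg ->
  is_derive (fun y => f y * g y) x (df * g x + f x * dg).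
Proof. intros. apply (is_derive_mult f g x df dg); auto. intros; apply Rmult_comm. Qed.
Lemma isd_plus (f g : R -> R) x df dg : is_derive f x df -> is_derive g x dg ->
  is_derive (fun y => f y + g y) x (df + dg).
Proof. intros. apply (is_derive_plus f g x df dg); auto. Qed.
Lemma isd_minus (f g : R -> R) x df dg : is_derive f x df -> is_derive g x dg ->
  is_derive (fun y => f y - g y) x (df - dg).
Proof. intros. apply (is_derive_minus f g x df dg); auto. Qed.
Lemma isd_eq (f : R -> R) (x l l' : R) : is_derive f x l -> l = l' -> is_derive f x l'.
Proof. intros H <-; auto. Qed.

Lemma isd_sum4 (f0 f1 f2 f3 : R -> R) x l0 l1 l2 l3 :
  is_derive f0 x l0 -> is_derive f1 x l1 -> is_derive f2 x l2 -> is_derive f3 x l3 ->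
  is_derive (fun y => f0 y + f1 y + f2 y + f3 y) x (l0 + l1 + l2 + l3).
Proof.
  intros H0 H1 H2 H3.
  apply (isd_plus (fun y => f0 y + f1 y + f2 y) f3); auto.
  apply (isd_plus (fun y => f0 y + f1 y) f2); auto.
  apply (isd_plus f0 f1); auto.
Qed.
Lemma isd_sq (f : R -> R) x l : is_derive f x l -> is_derive (fun y => f y * f y) x (2 * f x * l).
Proof. intros H. apply (isd_eq _ _ (l * f x + f x * l)); [apply (isd_mult f f); auto| ring]. Qed.

(* uniqueness via energy *)
Lemma uniq_fwd (B b : R) (v w : R -> R) : 0 < B ->
  (forall k x, (k <= 4)%nat -> ex_derive_n v k x) ->
  (forall k x, (k <= 4)%nat -> ex_derive_n w k x) ->
  (forall x, Derive_n v 4 x = B * v x) -> (forall x, Derive_n w 4 x = B * w x) ->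
  (forall j, (j <= 3)%nat -> Derive_n v j b = Derive_n w j b) ->
  forall x, b <= x -> forall j, (j <= 3)%nat -> Derive_n v j x = Derive_n w j x.
Proof.
  intros HB Hv Hw Hv4 Hw4 Hb.
  set (d := fun j y => Derive_n v j y - Derive_n w j y).
  assert (Hd : forall j y, (j <= 3)%nat -> is_derive (d j) y (d (S j) y)).
  { intros j y Hj. unfold d. apply isd_minus.
    - apply Derive_correct. apply (Hv (S j) y). lia.
    - apply Derive_correct. apply (Hw (S j) y). lia. }
  assert (Hd4 : forall y, d 4%nat y = B * d 0%nat y).
  { intros y. unfold d. rewrite Hv4, Hw4. simpl. ring. }
  set (K := 2 + B).
  set (E := fun y => d 0%nat y * d 0%nat y + d 1%nat y * d 1%nat y + d 2%nat y * d 2%nat y + d 3%nat y * d 3%nat y).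
  set (h := fun y => exp (- K * (y - b))).
  assert (Hh : forall y, is_derive h y (- K * h y)).
  { intros y. unfold h. auto_derive; auto. unfold Rminus; ring. }
  assert (HE : forall y, is_derive E y (2 * (d 0%nat y * d 1%nat y + d 1%nat y * d 2%nat y + d 2%nat y * d 3%nat y + B * d 3%nat y * d 0%nat y))).
  { intros y. unfold E.
    eapply isd_eq.
    { apply (isd_sum4 (fun y => d 0%nat y * d 0%nat y) (fun y => d 1%nat y * d 1%nat y) (fun y => d 2%nat y * d 2%nat y) (fun y => d 3%nat y * d 3%nat y));
      apply isd_sq; apply Hd; lia. }
    rewrite Hd4. ring. }
  set (Phi := fun y => E y * h y).
  set (dPhi := fun y => 2 * (d 0%nat y * d 1%nat y + d 1%nat y * d 2%nat y + d 2%nat y * d 3%nat y + B * d 3%nat y * d 0%nat y) * h y + E y * (- K * h y)).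
  assert (HPhi : forall y, is_derive Phi y (dPhi y)).
  { intros y. apply (isd_mult E h); auto. }
  assert (HdPhi : forall y, dPhi y <= 0).
  { intros y. unfold dPhi, E, K. pose proof (exp_pos (- (2 + B) * (y - b))) as Hp. fold K in Hp.
    change (exp (- K * (y - b))) with (h y) in Hp.
    set (a0 := d 0%nat y) in *. set (a1 := d 1%nat y) in *. set (a2 := d 2%nat y) in *. set (a3 := d 3%nat y) in *.
    assert (Hq : 2 * (a0 * a1 + a1 * a2 + a2 * a3 + B * a3 * a0) - (2 + B) * (a0 * a0 + a1 * a1 + a2 * a2 + a3 * a3) <= 0).
    { assert (X1 : 0 <= (a0 - a1) * (a0 - a1)) by apply Rle_0_sqr. assert (X2 : 0 <= (a1 - a2) * (a1 - a2)) by apply Rle_0_sqr.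
      assert (X3 : 0 <= (a2 - a3) * (a2 - a3)) by apply Rle_0_sqr. assert (X4 : 0 <= B * ((a3 - a0) * (a3 - a0))) by (apply Rmult_le_pos; [lra|apply Rle_0_sqr]).
      assert (X5 : 0 <= a0 * a0) by apply Rle_0_sqr. assert (X6 : 0 <= a3 * a3) by apply Rle_0_sqr.
      assert (X7 : 0 <= B * (a1 * a1)) by (apply Rmult_le_pos; [lra|apply Rle_0_sqr]).
      assert (X8 : 0 <= B * (a2 * a2)) by (apply Rmult_le_pos; [lra|apply Rle_0_sqr]).
      assert (Eq : 2 * (a0 * a1 + a1 * a2 + a2 * a3 + B * a3 * a0) - (2 + B) * (a0 * a0 + a1 * a1 + a2 * a2 + a3 * a3)
        = - ((a0 - a1) * (a0 - a1) + (a1 - a2) * (a1 - a2) + (a2 - a3) * (a2 - a3) + B * ((a3 - a0) * (a3 - a0)) + a0 * a0 + a3 * a3 + B * (a1 * a1) + B * (a2 * a2))) by ring.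
      rewrite Eq. lra. }
    replace (2 * (a0 * a1 + a1 * a2 + a2 * a3 + B * a3 * a0) * h y + (a0 * a0 + a1 * a1 + a2 * a2 + a3 * a3) * (- (2 + B) * h y))
      with (h y * (2 * (a0 * a1 + a1 * a2 + a2 * a3 + B * a3 * a0) - (2 + B) * (a0 * a0 + a1 * a1 + a2 * a2 + a3 * a3))) by ring.
    rewrite <- (Rmult_0_r (h y)). apply Rmult_le_compat_l; lra. }
  assert (HE0 : E b = 0).
  { unfold E, d. rewrite !Hb by lia. ring. }
  intros x Hx.
  assert (Hle : Phi x <= Phi b).
  { apply (decr_le Phi dPhi b x); auto. }
  assert (HPb : Phi b = 0) by (unfold Phi; rewrite HE0; ring).
  assert (Hhx : 0 < h x) by (unfold h; apply exp_pos).
  assert (HEx : E x <= 0).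
  { rewrite HPb in Hle. unfold Phi in Hle. destruct (Rle_lt_dec (E x) 0); auto.
    assert (0 < E x * h x) by (apply Rmult_lt_0_compat; auto). lra. }
  unfold E in HEx.
  pose proof (Rle_0_sqr (d 0%nat x)). pose proof (Rle_0_sqr (d 1%nat x)).
  pose proof (Rle_0_sqr (d 2%nat x)). pose proof (Rle_0_sqr (d 3%nat x)). unfold Rsqr in *.
  assert (Z0 : d 0%nat x = 0) by (apply Rsqr_0_uniq; unfold Rsqr; lra).
  assert (Z1 : d 1%nat x = 0) by (apply Rsqr_0_uniq; unfold Rsqr; lra).
  assert (Z2 : d 2%nat x = 0) by (apply Rsqr_0_uniq; unfold Rsqr; lra).
  assert (Z3 : d 3%nat x = 0) by (apply Rsqr_0_uniq; unfold Rsqr; lra).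
  intros j Hj. unfold d in *.
  destruct j as [|[|[|[|j]]]]; try lra; lia.
Qed.


Definition G g0 g1 g2 g3 m (j : nat) : R -> R :=
  match j with 0%nat => F0 g0 g1 g2 g3 m | 1%nat => F1 g0 g1 g2 g3 m | 2%nat => F2 g0 g1 g2 g3 m
  | 3%nat => F3 g0 g1 g2 g3 m | _ => F0 g0 g1 g2 g3 m end.
Definition usol g0 g1 g2 g3 m b (x : R) := F0 g0 g1 g2 g3 m ((x - b) / m).
Definition Uj g0 g1 g2 g3 m b (j : nat) (x : R) := (/ m) ^ j * G g0 g1 g2 g3 m j ((x - b) / m).

Lemma dG g0 g1 g2 g3 m j s : (j <= 3)%nat -> is_derive (G g0 g1 g2 g3 m j) s (G g0 g1 g2 g3 m (S j) s).
Proof.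
  intros Hj. destruct j as [|[|[|[|j]]]]; simpl; [apply dF0|apply dF1|apply dF2|apply dF3|lia].
Qed.

Lemma dU g0 g1 g2 g3 m b j x : 0 < m -> (j <= 3)%nat ->
  is_derive (Uj g0 g1 g2 g3 m b j) x (Uj g0 g1 g2 g3 m b (S j) x).
Proof.
  intros Hm Hj. unfold Uj.
  apply (isd_eq _ _ ((/ m) ^ j * (/ m * G g0 g1 g2 g3 m (S j) ((x - b) / m)))).
  - apply is_derive_scal.
    apply (is_derive_comp (G g0 g1 g2 g3 m j) (fun y => (y - b) / m) x).
    + apply dG; auto.
    + auto_derive; auto. field. lra.
  - simpl. ring.
Qed.

Lemma Dn g0 g1 g2 g3 m b : 0 < m -> forall j, (j <= 4)%nat -> forall x,
  Derive_n (usol g0 g1 g2 g3 m b) j x = Uj g0 g1 g2 g3 m b j x /\ ex_derive_n (usol g0 g1 g2 g3 m b) j x.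
Proof.
  intros Hm j. induction j as [|j IH]; intros Hj x.
  - split; [|exact I]. simpl. unfold usol, Uj. simpl. ring.
  - assert (Heq : forall y, Derive_n (usol g0 g1 g2 g3 m b) j y = Uj g0 g1 g2 g3 m b j y).
    { intros y. apply IH; lia. }
    split.
    + simpl. rewrite (Derive_ext _ _ x Heq). apply is_derive_unique. apply dU; auto; lia.
    + simpl. apply (ex_derive_ext (Uj g0 g1 g2 g3 m b j)); [intros; symmetry; apply Heq|].
      eexists. apply dU; auto; lia.
Qed.

Lemma usol_ivp g0 g1 g2 g3 m b : 0 < m -> solves_ivp ((/ m) ^ 4) b g0 g1 g2 g3 (usol g0 g1 g2 g3 m b).
Proof.
  intros Hm. pose proof (Dn g0 g1 g2 g3 m b Hm) as H.
  assert (Hb0 : (b - b) / m = 0) by (field; lra).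
  repeat split.
  - intros k x Hk. apply H; auto.
  - intros x. rewrite (proj1 (H 4%nat ltac:(lia) x)). unfold Uj, usol. simpl. ring.
  - rewrite (proj1 (H 0%nat ltac:(lia) b)). unfold Uj; simpl. rewrite Hb0, F0_0. ring.
  - rewrite (proj1 (H 1%nat ltac:(lia) b)). unfold Uj; simpl. rewrite Hb0, F1_0. field. lra.
  - rewrite (proj1 (H 2%nat ltac:(lia) b)). unfold Uj; simpl. rewrite Hb0, F2_0. field. lra.
  - rewrite (proj1 (H 3%nat ltac:(lia) b)). unfold Uj; simpl. rewrite Hb0, F3_0. field. lra.
Qed.

Lemma fz_fin (D f : R -> R) b m c r : 0 < m -> c <> 0 ->
  (forall x, b <= x -> D x = c * f ((x - b) / m)) -> 0 < r -> f r = 0 ->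
  (forall s, 0 < s < r -> f s <> 0) -> first_zero D b (Finite (b + m * r)).
Proof.
  intros Hm Hc HD Hr Hfr Hn. simpl. split; [nra|split].
  - rewrite HD by nra. replace ((b + m * r - b) / m) with r by (field; lra). rewrite Hfr; ring.
  - intros y Hy. rewrite HD by lra. apply Rmult_integral_contrapositive_currified; auto.
    apply Hn. split.
    + apply Rdiv_lt_0_compat; lra.
    + apply (Rmult_lt_reg_r m); auto. replace ((y - b) / m * m) with (y - b) by (field; lra). lra.
Qed.

Lemma fz_inf (D f : R -> R) b m c : 0 < m -> c <> 0 ->
  (forall x, b <= x -> D x = c * f ((x - b) / m)) ->
  (forall s, 0 < s -> f s <> 0) -> first_zero D b p_infty.
Proof.
  intros Hm Hc HD Hn. simpl. intros y Hy. rewrite HD by lra.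
  apply Rmult_integral_contrapositive_currified; auto. apply Hn. apply Rdiv_lt_0_compat; lra.
Qed.

Theorem lemma1 (b g0 g1 g2 g3 : R)
  (hg0 : 0 < g0) (hg1 : 0 < g1) (hg2 : g2 < 0) (hg3 : g3 < 0) :
  exists B : R, 0 < B /\
    (exists u : R -> R, solves_ivp B b g0 g1 g2 g3 u) /\
    (forall u : R -> R, solves_ivp B b g0 g1 g2 g3 u ->
       exists z : Rbar,
         first_zero (Derive_n u 1) b z /\ first_zero (Derive_n u 3) b z).
Proof.
  destruct (crit g0 g1 g2 g3 hg0 hg1 hg2 hg3) as [m [Hm [HnA HnC]]].
  assert (HB : 0 < (/ m) ^ 4) by (apply pow_lt, Rinv_0_lt_compat; auto).
  exists ((/ m) ^ 4). split; [auto|split].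
  { exists (usol g0 g1 g2 g3 m b). apply usol_ivp; auto. }
  intros v Hv.
  pose proof (usol_ivp g0 g1 g2 g3 m b Hm) as Hu.
  destruct Hv as [Hv1 [Hv2 [Hv3 [Hv4 [Hv5 Hv6]]]]].
  destruct Hu as [Hu1 [Hu2 [Hu3 [Hu4 [Hu5 Hu6]]]]].
  assert (Heq : forall x, b <= x -> forall j, (j <= 3)%nat -> Derive_n v j x = Derive_n (usol g0 g1 g2 g3 m b) j x).
  { apply (uniq_fwd ((/ m) ^ 4)); auto.
    intros j Hj. destruct j as [|[|[|[|j]]]]; try lia; congruence. }
  set (f1 := F1 g0 g1 g2 g3 m). set (f3 := F3 g0 g1 g2 g3 m).
  assert (HD1 : forall x, b <= x -> Derive_n v 1 x = / m * f1 ((x - b) / m)).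
  { intros x Hx. rewrite Heq by (auto; lia). rewrite (proj1 (Dn g0 g1 g2 g3 m b Hm 1%nat ltac:(lia) x)).
    unfold Uj, f1; simpl. ring. }
  assert (HD3 : forall x, b <= x -> Derive_n v 3 x = (/ m) ^ 3 * f3 ((x - b) / m)).
  { intros x Hx. rewrite Heq by (auto; lia). rewrite (proj1 (Dn g0 g1 g2 g3 m b Hm 3%nat ltac:(lia) x)).
    unfold Uj, f3; simpl. ring. }
  assert (Hc1 : / m <> 0) by (apply Rinv_neq_0_compat; lra).
  assert (Hc3 : (/ m) ^ 3 <> 0) by (apply pow_nonzero; auto).
  assert (H10 : 0 < f1 0) by (unfold f1; rewrite F1_0; nra).
  assert (H30 : f3 0 < 0) by (unfold f3; rewrite F3_0; assert (0 < m*m*m) by (repeat apply Rmult_lt_0_compat; auto); nra).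
  destruct (classic (exists s, 0 < s /\ f1 s = 0)) as [[s1 [Hs1 Hs1']]|N1];
  destruct (classic (exists s, 0 < s /\ f3 s = 0)) as [[s3 [Hs3 Hs3']]|N3].
  - destruct (first_zero_ex f1 0 s1) as [r1 [Hr1 [_ [Hr1' Hr1n]]]]; auto; [intros; apply cF1|lra|].
    destruct (first_zero_ex f3 0 s3) as [r3 [Hr3 [_ [Hr3' Hr3n]]]]; auto; [intros; apply cF3|lra|].
    assert (P1 : forall s, 0 <= s < r1 -> 0 < f1 s) by (apply sign_pos; auto; apply cF1).
    assert (P3 : forall s, 0 <= s < r3 -> f3 s < 0) by (apply sign_neg; auto; apply cF3).
    destruct (Rtotal_order r1 r3) as [Hlt|[Heq13|Hgt]].
    + exfalso. apply HnA. exists r1. repeat split; auto. intros s Hs. apply P3. lra.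
    + subst r3. exists (Finite (b + m * r1)). split.
      * apply (fz_fin _ f1 b m (/ m)); auto. intros s Hs; apply Hr1n; lra.
      * apply (fz_fin _ f3 b m ((/ m) ^ 3)); auto. intros s Hs; apply Hr3n; lra.
    + exfalso. apply HnC. exists r3. repeat split; auto. intros s Hs. apply P1. lra.
  - destruct (first_zero_ex f1 0 s1) as [r1 [Hr1 [_ [Hr1' Hr1n]]]]; auto; [intros; apply cF1|lra|].
    exfalso. apply HnA. exists r1. repeat split; auto.
    + apply sign_pos; auto; apply cF1.
    + apply (sign_neg_c f3 0 r1); auto; [apply cF3|].
      intros y Hy Hy0. destruct (Req_dec y 0) as [->|]; [lra|]. apply N3. exists y; split; [lra|auto].
  - destruct (first_zero_ex f3 0 s3) as [r3 [Hr3 [_ [Hr3' Hr3n]]]]; auto; [intros; apply cF3|lra|].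
    exfalso. apply HnC. exists r3. repeat split; auto.
    + apply sign_neg; auto; apply cF3.
    + apply (sign_pos_c f1 0 r3); auto; [apply cF1|].
      intros y Hy Hy0. destruct (Req_dec y 0) as [->|]; [lra|]. apply N1. exists y; split; [lra|auto].
  - exists p_infty. split.
    + apply (fz_inf _ f1 b m (/ m)); auto. intros s Hs Hs0. apply N1. exists s; auto.
    + apply (fz_inf _ f3 b m ((/ m) ^ 3)); auto. intros s Hs Hs0. apply N3. exists s; auto.
Qed.
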